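(* Let $\Sigma$ be any set of leapfrog implications (over a signature $\mathcal{R}$). Then the spi-logic $\mathsf{SPi}+\Sigma$ is complex, and hence complete.
   Context: Fix a non-empty set $\mathcal{R}$ (the signature). Sp-formulas are built from propositional variables (from a countably infinite set) and the constant $\top$ using $\wedge$ and unary diamonds $\Diamond_R$, $R\in\mathcal{R}$; an sp-implication is an expression $\sigma\to\tau$ with $\sigma,\tau$ sp-formulas. A SLO (meet-semilattice with monotone operators) is an algebra $\mathfrak{A}=(A,\wedge,\top,\Diamond_R)_{R\in\mathcal{R}}$ such that $(A,\wedge,\top)$ is a meet-semilattice with top element $\top$ and each $\Diamond_R$ is monotone w.r.t. $a\le b\iff a\wedge b=a$. $\mathfrak{A}$ validates $\sigma\to\tau$ if $\sigma[\mathfrak a]\le\tau[\mathfrak a]$ for every valuation $\mathfrak a$ of the variables in $A$. A frame is $\mathfrak{F}=(W,R^{\mathfrak F})_{R\in\mathcal R}$ with $W\neq\emptyset$ and binary relations $R^{\mathfrak F}$; sp-formulas are evaluated in Kripke models over $\mathfrak F$ as usual ($\Diamond_R\varphi$ is true at $w$ iff $\varphi$ is true at some $v$ with $(w,v)\in R^{\mathfrak F}$); $\mathfrak F$ validates $\sigma\to\tau$ if in every model over $\mathfrak F$, at every point, $\sigma$ true implies $\tau$ true. For a set $\Sigma$ of sp-implications: $\Sigma\models_{\mathsf{Kr}}\iota$ iff $\iota$ is valid in every frame validating $\Sigma$; $\Sigma\models_{\mathsf{SLO}}\iota$ iff $\iota$ is valid in every SLO validating $\Sigma$. The spi-logic $\mathsf{SPi}+\Sigma$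 is the set of sp-implications $\iota$ with $\Sigma\models_{\mathsf{SLO}}\iota$ (equivalently, derivable from substitution instances of $\Sigma$ and of $p\to p$, $p\to\top$, $p\wedge q\to q\wedge p$, $p\wedge q\to p$ by the rules: from $\sigma\to\tau,\tau\to\rho$ infer $\sigma\to\rho$; from $\sigma\to\tau,\sigma\to\rho$ infer $\sigma\to\tau\wedge\rho$; from $\sigma\to\tau$ infer $\Diamond_R\sigma\to\Diamond_R\tau$). It is complete if $\Sigma\models_{\mathsf{Kr}}\iota\iff\Sigma\models_{\mathsf{SLO}}\iota$ for every sp-implication $\iota$. For a frame $\mathfrak F$, $\mathfrak F^\star=(2^W,\cap,W,\Diamond_R^+)_{R}$ where $\Diamond_R^+X=\{w\mid \exists v\in X\,(w,v)\in R^{\mathfrak F}\}$. A spi-logic $L$ is complex if every SLO validating $L$ is embeddable (by an injective map preserving $\wedge,\top$ and all $\Diamond_R$) into $\mathfrak F^\star$ for some frame $\mathfrak F$ validating $L$. A profile is $\pi=(\mathfrak G,S,u,v)$ where $\mathfrak G=(\Delta,R^{\mathfrak G})_{R\in\mathcal R}$ is a finite rooted frame, $u,v\in\Delta$, $S\in\mathcal R$ and $(u,v)\notin S^{\mathfrak G}$; with $\Delta=\{x_0,\dots,x_n\}$ it represents the first-order sentence $\Phi_\pi=\forall x_0\dots x_n\big(\bigwedge_{(x_i,x_j)\in R^{\mathfrak G},R\in\mathcal R}R(x_i,x_j)\to S(u,v)\big)$. An sp-implication $\iota$ is a Horn-implication with profile $\pi$ if, for every frame $\mathfrak F$, $\mathfrak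 F$ validates $\iota$ iff $\mathfrak F\models\Phi_\pi$. A profile is a tree-profile if $(\Delta,\bigcup_R R^{\mathfrak G})$ is a finite directed tree and the relations $R^{\mathfrak G}$ are pairwise disjoint; it is rooted if $u$ is the root of this tree; a rooted tree-profile $(\mathfrak G,S,u,v)$ is leapfrog if there is no $w$ with $(u,w)\in S^{\mathfrak G}$. A leapfrog implication is a Horn-implication of the form $\varrho\to\Diamond_S p$ ($p$ a variable) having a leapfrog profile of the form $(\mathfrak G,S,u,v)$. *)

(* Defs.v *)
From Stdlib Require Import List Relations FinFun.
Set Implicit Arguments.

Section Defs.
Variable Sig : Type.

Inductive spf : Type :=
| Var : nat -> spf
| Top : spf
| And : spf -> spf -> spf
| Dia : Sig -> spf -> spf.

Definition spi : Type := (spf * spf)%type.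

Record SLO : Type := {
  car : Type;
  meet : car -> car -> car;
  top : car;
  dia : Sig -> car -> car;
  meet_assoc : forall a b c, meet a (meet b c) = meet (meet a b) c;
  meet_comm : forall a b, meet a b = meet b a;
  meet_idem : forall a, meet a a = a;
  meet_top : forall a, meet a top = a;
  dia_mono : forall R a b, meet a b = a -> meet (dia R a) (dia R b) = dia R a
}.

Definition sle (A : SLO) (a b : car A) : Prop := meet A a b = a.

Fixpoint aeval (A : SLO) (val : nat -> car A) (f : spf) : car A :=
  match f with
  | Var n => val n
  | Top => top A
  | And f g => meet A (aeval A val f) (aeval A val g)
  | Dia R f => dia A R (aeval A val f)
  end.

Definition slo_valid (A : SLO) (i : spi) : Prop :=
  forall val : nat -> car A, sle A (aeval A val (fst i)) (aeval A val (snd i)).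

Record frame : Type := {
  W : Type;
  W_ne : inhabited W;
  rel : Sig -> W -> W -> Prop
}.

Fixpoint sat (F : frame) (V : nat -> W F -> Prop) (w : W F) (f : spf) : Prop :=
  match f with
  | Var n => V n w
  | Top => True
  | And f g => sat F V w f /\ sat F V w g
  | Dia R f => exists v, rel F R w v /\ sat F V v f
  end.

Definition frame_valid (F : frame) (i : spi) : Prop :=
  forall (V : nat -> W F -> Prop) (w : W F), sat F V w (fst i) -> sat F V w (snd i).

Definition kr_conseq (Sigma : spi -> Prop) (i : spi) : Prop :=
  forall F : frame, (forall j, Sigma j -> frame_valid F j) -> frame_valid F i.

Definition slo_conseq (Sigma : spi -> Prop) (i : spi) : Prop :=
  forall A : SLO, (forall j, Sigma j -> slo_valid A j) -> slo_valid A i.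

Definition spi_logic (Sigma : spi -> Prop) : spi -> Prop := slo_conseq Sigma.

Definition complete (Sigma : spi -> Prop) : Prop :=
  forall i, kr_conseq Sigma i <-> slo_conseq Sigma i.

(* embeddability of an SLO into the complex algebra F^* = (2^W, cap, W, Dia^+) ;
   subsets of W are represented as predicates W -> Prop *)
Definition embeds_into_complex (A : SLO) (F : frame) : Prop :=
  exists h : car A -> (W F -> Prop),
    (forall a b, h a = h b -> a = b) /\
    (forall a b, h (meet A a b) = (fun w => h a w /\ h b w)) /\
    h (top A) = (fun _ => True) /\
    (forall R a, h (dia A R a) = (fun w => exists v, rel F R w v /\ h a v)).

Definition complex (L : spi -> Prop) : Prop :=
  forall A : SLO, (forall i, L i -> slo_valid A i) ->
    exists F : frame, (forall i, L i -> frame_valid F i) /\ embeds_into_complex A F.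

Definition edge (D : Type) (RG : Sig -> D -> D -> Prop) (x y : D) : Prop :=
  exists R, RG R x y.

Definition rooted_frame (D : Type) (RG : Sig -> D -> D -> Prop) : Prop :=
  exists r, forall x, clos_refl_trans D (edge RG) r x.

Definition is_profile (D : Type) (RG : Sig -> D -> D -> Prop) (S : Sig) (u v : D) : Prop :=
  Finite D /\ inhabited D /\ rooted_frame RG /\ ~ RG S u v.

(* first-order sentence Phi_pi holds in frame F *)
Definition frame_sat_profile (F : frame) (D : Type) (RG : Sig -> D -> D -> Prop)
  (S : Sig) (u v : D) : Prop :=
  forall f : D -> W F,
    (forall R x y, RG R x y -> rel F R (f x) (f y)) -> rel F S (f u) (f v).

Definition dtree_rooted_at (D : Type) (E : D -> D -> Prop) (r : D) : Prop :=
  (forall x, ~ E x r) /\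
  (forall x, x <> r -> exists! y, E y x) /\
  (forall x, clos_refl_trans D E r x).

Definition leapfrog_profile (D : Type) (RG : Sig -> D -> D -> Prop) (S : Sig) (u v : D) : Prop :=
  is_profile RG S u v /\
  (exists r, dtree_rooted_at (edge RG) r) /\
  (forall R R' x y, R <> R' -> RG R x y -> RG R' x y -> False) /\
  dtree_rooted_at (edge RG) u /\
  (forall w, ~ RG S u w).

Definition horn_with_profile (i : spi) (D : Type) (RG : Sig -> D -> D -> Prop)
  (S : Sig) (u v : D) : Prop :=
  forall F : frame, frame_valid F i <-> frame_sat_profile F RG S u v.

Definition leapfrog_implication (i : spi) : Prop :=
  exists (rho : spf) (S : Sig) (p : nat),
    i = (rho, Dia S (Var p)) /\
    exists (D : Type) (RG : Sig -> D -> D -> Prop) (u v : D),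
      leapfrog_profile RG S u v /\ horn_with_profile i RG S u v.

End Defs.

(* Main.v *)
Require Import Defs.
From Stdlib Require Import List Relations FinFun Classical FunctionalExtensionality PropExtensionality Arith Lia.
Set Implicit Arguments.

Section Gen.
Variable Sig : Type.

Section SLOfacts.
Variable A : SLO Sig.
Lemma sle_refl a : sle A a a. Proof. apply meet_idem. Qed.
Lemma sle_trans a b c : sle A a b -> sle A b c -> sle A a c.
Proof. unfold sle; intros H1 H2. rewrite <- H1 at 1. rewrite <- meet_assoc, H2. exact H1. Qed.
Lemma sle_top a : sle A a (top A). Proof. apply meet_top. Qed.
Lemma sle_lb1 a b : sle A (meet A a b) a.
Proof. unfold sle. rewrite <- meet_assoc, (meet_comm A b a), meet_assoc, meet_idem. reflexivity. Qed.
Lemma sle_lb2 a b : sle A (meet A a b) b.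
Proof. unfold sle. rewrite <- meet_assoc, meet_idem. reflexivity. Qed.
Lemma sle_glb a b c : sle A a b -> sle A a c -> sle A a (meet A b c).
Proof. unfold sle; intros H1 H2. rewrite meet_assoc, H1, H2. reflexivity. Qed.
Lemma sle_dia R a b : sle A a b -> sle A (dia A R a) (dia A R b).
Proof. apply dia_mono. Qed.
End SLOfacts.

Section Cplx.
Variable F : frame Sig.
Definition Fstar : SLO Sig.
Proof.
  refine (@Build_SLO Sig (W F -> Prop) (fun X Y w => X w /\ Y w) (fun _ => True)
            (fun R X w => exists v, rel F R w v /\ X v) _ _ _ _ _);
  intros; apply functional_extensionality; intro w; apply propositional_extensionality.
  - tauto.
  - tauto.
  - tauto.
  - tauto.
  - split; [tauto|]. intro H0. split; [exact H0|].
    destruct H0 as [x [Hx1 Hx2]]. exists x. split; [exact Hx1|].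
    assert (Hb := equal_f H x). simpl in Hb. rewrite <- Hb in Hx2. tauto.
Defined.

Lemma Fstar_aeval val phi w : aeval Fstar val phi w <-> sat F val w phi.
Proof.
  revert w; induction phi; intro w; simpl; try tauto.
  - rewrite IHphi1, IHphi2; tauto.
  - split; intros [x [H1 H2]]; exists x; split; try assumption; apply IHphi; assumption.
Qed.

Lemma Fstar_valid i : slo_valid Fstar i <-> frame_valid F i.
Proof.
  unfold slo_valid, frame_valid, sle; split.
  - intros H V w Hs. specialize (H V). assert (Hw := equal_f H w). simpl in Hw.
    apply Fstar_aeval. apply Fstar_aeval in Hs. rewrite <- Hw in Hs. tauto.
  - intros H val. apply functional_extensionality; intro w; apply propositional_extensionality.
    simpl. split; [tauto|]. intro Hs. split; [exact Hs|].
    apply Fstar_aeval. apply H. apply Fstar_aeval. exact Hs.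
Qed.
End Cplx.

Lemma sat_transfer (F1 F2 : frame Sig) (k : W F1 -> W F2) V1 V2 :
  (forall R x y, rel F1 R x y -> rel F2 R (k x) (k y)) ->
  (forall n x, V1 n x -> V2 n (k x)) ->
  forall phi x, sat F1 V1 x phi -> sat F2 V2 (k x) phi.
Proof.
  intros HR HV phi; induction phi; intros x; simpl; auto.
  - intros [H1 H2]; auto.
  - intros [y [H1 H2]]. exists (k y); auto.
Qed.

Section Filt.
Variable A : SLO Sig.
Definition isFilter (P : car A -> Prop) : Prop :=
  P (top A) /\ (forall a b, P a -> sle A a b -> P b) /\ (forall a b, P a -> P b -> P (meet A a b)).
Definition filt := { P : car A -> Prop | isFilter P }.

Definition princ (a : car A) : filt.
Proof.
  exists (fun x => sle A a x). split; [|split].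
  - apply sle_top.
  - intros x y H1 H2; eapply sle_trans; eassumption.
  - intros; apply sle_glb; assumption.
Defined.

Definition FF : frame Sig :=
  {| W := filt; W_ne := inhabits (princ (top A));
     rel := fun R (P Q : filt) => forall b, proj1_sig Q b -> proj1_sig P (dia A R b) |}.

Lemma dia_char (P : filt) R a :
  proj1_sig P (dia A R a) <-> exists Q : filt, rel FF R P Q /\ proj1_sig Q a.
Proof.
  destruct P as [P [Ht [Hu Hm]]]; simpl. split.
  - intro H. exists (princ a). simpl. split; [|apply sle_refl].
    intros b Hb. eapply Hu; [exact H|]. apply sle_dia; exact Hb.
  - intros [Q [H1 H2]]. apply H1; exact H2.
Qed.

Lemma FF_key val phi (P : filt) :
  sat FF (fun n (Q : filt) => proj1_sig Q (val n)) P phi <-> proj1_sig P (aeval A val phi).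
Proof.
  revert P; induction phi; intro P; simpl.
  - tauto.
  - destruct P as [P [Ht ?]]; simpl; tauto.
  - rewrite IHphi1, IHphi2. destruct P as [P [Ht [Hu Hm]]]; simpl. split.
    + intros [H1 H2]; auto.
    + intro H; split; eapply Hu; try exact H; [apply sle_lb1 | apply sle_lb2].
  - rewrite dia_char. split; intros [Q [H1 H2]]; exists Q; split; auto; apply IHphi; auto.
Qed.

Definition hemb (a : car A) : W FF -> Prop := fun P => proj1_sig P a.

Lemma FF_embeds : embeds_into_complex A FF.
Proof.
  exists hemb. split; [|split; [|split]].
  - intros a b H. assert (H1 := equal_f H (princ a)). assert (H2 := equal_f H (princ b)).
    unfold hemb in H1, H2; simpl in H1, H2.
    assert (Hab : sle A a b) by (rewrite <- H1; apply sle_refl).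
    assert (Hba : sle A b a) by (rewrite H2; apply sle_refl).
    unfold sle in *. rewrite <- Hab, meet_comm. exact Hba.
  - intros a b. apply functional_extensionality; intro P; apply propositional_extensionality.
    unfold hemb. destruct P as [P [Ht [Hu Hm]]]; simpl. split.
    + intro H; split; eapply Hu; try exact H; [apply sle_lb1 | apply sle_lb2].
    + intros [H1 H2]; auto.
  - apply functional_extensionality; intro P; apply propositional_extensionality.
    unfold hemb. destruct P as [P [Ht ?]]; simpl; tauto.
  - intros R a. apply functional_extensionality; intro P; apply propositional_extensionality.
    unfold hemb. apply dia_char.
Qed.
End Filt.

Section Tree.
Variable D : Type.
Variable RG : Sig -> D -> D -> Prop.
Variable u : D.
Hypothesis Htree : dtree_rooted_at (edge RG) u.
Hypothesis Hfin : Finite D.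

Lemma t_rt x y : clos_trans D (edge RG) x y -> clos_refl_trans D (edge RG) x y.
Proof. induction 1; [apply rt_step; assumption | eapply rt_trans; eassumption]. Qed.

Lemma t_last x z : clos_trans D (edge RG) x z ->
  edge RG x z \/ exists t, clos_trans D (edge RG) x t /\ edge RG t z.
Proof.
  intro H. apply clos_trans_tn1 in H. destruct H as [z Hz | t z Hz Ht].
  - left; exact Hz.
  - right; exists t; split; [apply clos_tn1_trans; exact Ht | exact Hz].
Qed.

Lemma no_cyc_rt y : clos_refl_trans D (edge RG) u y -> ~ clos_trans D (edge RG) y y.
Proof.
  destruct Htree as [Hnr [Hpar _]].
  intro H. apply clos_rt_rtn1 in H. induction H.
  - intro Hc. destruct (t_last Hc) as [Hw | [t [_ Hw]]]; eapply Hnr; eassumption.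
  - intro Hc. apply IHclos_refl_trans_n1.
    assert (Hzu : z <> u) by (intro E; subst; exact (Hnr y H)).
    destruct (Hpar z Hzu) as [p [_ Hp]].
    destruct (t_last Hc) as [Hw | [t [Hzt Hw]]].
    + assert (p = y) by (apply Hp; exact H). assert (p = z) by (apply Hp; exact Hw). subst.
      apply t_step; exact H.
    + assert (p = y) by (apply Hp; exact H). assert (p = t) by (apply Hp; exact Hw). subst.
      eapply t_trans; [apply t_step; exact H| exact Hzt].
Qed.

Lemma no_cycle x : ~ clos_trans D (edge RG) x x.
Proof. apply no_cyc_rt. exact (proj2 (proj2 Htree) x). Qed.

Lemma rt_eq_t x y : clos_refl_trans D (edge RG) x y -> x = y \/ clos_trans D (edge RG) x y.
Proof.
  induction 1.
  - right; apply t_step; assumption.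
  - left; reflexivity.
  - destruct IHclos_refl_trans1 as [-> | H1]; destruct IHclos_refl_trans2 as [-> | H2]; auto.
    right; eapply t_trans; eassumption.
Qed.

Lemma nohom (f : D -> D) : (forall R x y, RG R x y -> RG R (f x) (f y)) -> f u = u.
Proof.
  intro Hf. apply NNPP; intro Hne.
  assert (He : forall x y, edge RG x y -> edge RG (f x) (f y))
    by (intros x y [R HR]; exists R; apply Hf; exact HR).
  assert (Ht : forall x y, clos_trans D (edge RG) x y -> clos_trans D (edge RG) (f x) (f y)).
  { induction 1; [apply t_step; auto | eapply t_trans; eassumption]. }
  assert (H0 : clos_trans D (edge RG) u (f u)).
  { destruct (rt_eq_t (proj2 (proj2 Htree) (f u))) as [E | E]; [congruence | exact E]. }
  set (g := fun n => Nat.iter n f u).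
  assert (Hs : forall n, clos_trans D (edge RG) (g n) (g (S n))).
  { induction n; [exact H0|]. simpl. apply Ht. exact IHn. }
  assert (Hlt : forall i j, i < j -> clos_trans D (edge RG) (g i) (g j)).
  { intros i j Hij. induction Hij; [apply Hs|]. eapply t_trans; [exact IHHij| apply Hs]. }
  assert (Hinj : Injective g).
  { intros i j E. destruct (Nat.lt_trichotomy i j) as [L | [L | L]]; auto; exfalso.
    - apply (no_cycle (x := g i)). rewrite E at 2. apply Hlt; exact L.
    - apply (no_cycle (x := g j)). rewrite <- E at 2. apply Hlt; exact L. }
  destruct Hfin as [l Hl].
  assert (Hnd : NoDup (map g (seq 0 (S (length l))))).
  { apply Injective_map_NoDup; [exact Hinj | apply seq_NoDup]. }
  assert (Hinc : incl (map g (seq 0 (S (length l)))) l) by (intros x _; apply Hl).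
  assert (Hlen := NoDup_incl_length Hnd Hinc).
  rewrite length_map, length_seq in Hlen. lia.
Qed.
End Tree.

Section Leap.
Variable D : Type.
Variable RG : Sig -> D -> D -> Prop.
Variable S : Sig.
Variables u v : D.
Variable p : nat.
Variable rho : spf Sig.
Hypothesis Hlp : leapfrog_profile RG S u v.
Hypothesis Hhorn : horn_with_profile (rho, Dia S (Var Sig p)) RG S u v.

Definition Dframe (r : Sig -> D -> D -> Prop) : frame Sig :=
  {| W := D; W_ne := inhabits u; rel := r |}.

Lemma Tr (r1 r2 : Sig -> D -> D -> Prop) V :
  (forall R x y, x <> u -> r1 R x y -> r2 R x y /\ y <> u) ->
  forall phi x, x <> u -> sat (Dframe r1) V x phi -> sat (Dframe r2) V x phi.
Proof.
  intros H phi; induction phi; intros x Hx; simpl; auto.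
  - intros [H1 H2]; split; auto.
  - intros [y [H1 H2]]. destruct (H s x y Hx H1) as [H3 H4]. exists y; split; auto.
Qed.

Lemma Hnoin : forall x y R, RG R x y -> y <> u.
Proof.
  destruct Hlp as [_ [_ [_ [[Hnr _] _]]]].
  intros x y R H E. subst. apply (Hnr x). exists R; exact H.
Qed.

Lemma Ulem (r : Sig -> D -> D -> Prop) (Hr : forall R x y, x <> u -> (r R x y <-> RG R x y)) V w :
  sat (Dframe r) V w rho -> ~ sat (Dframe r) V w (Dia S (Var Sig p)) -> w = u.
Proof.
  destruct Hlp as [[Hfin _] [_ [_ [Htree Hleap]]]].
  intros Hs Hn. apply NNPP; intro Hwu.
  set (Gw := fun R x y => RG R x y /\ x <> u).
  assert (Hval : frame_valid (Dframe Gw) (rho, Dia S (Var Sig p))).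
  { apply (proj2 (Hhorn (Dframe Gw))). intros f Hf. exfalso.
    assert (Hc : exists c, edge RG u c).
    { destruct (rt_eq_t (proj2 (proj2 Htree) w)) as [E | E]; [congruence|].
      apply clos_trans_t1n in E. destruct E as [y Hy | y z Hy _]; exists y; exact Hy. }
    destruct Hc as [c [R Hc]].
    assert (Hfu := nohom Htree Hfin f (fun R x y H => proj1 (Hf R x y H))).
    exact (proj2 (Hf R u c Hc) Hfu). }
  assert (Hs' : sat (Dframe Gw) V w rho).
  { apply (@Tr r Gw V); auto. intros R x y Hx H. apply Hr in H; auto.
    split; [split; auto | eapply Hnoin; eassumption]. }
  apply Hval in Hs'. simpl in Hs'. destruct Hs' as [y [[H1 H2] H3]].
  apply Hn. simpl. exists y. split; auto. apply Hr; auto.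
Qed.

Definition Vstar (n : nat) (x : D) : Prop := if Nat.eq_dec n p then x = v else True.

Lemma star : sat (Dframe RG) Vstar u rho.
Proof.
  assert (Hlp' := Hlp).
  destruct Hlp' as [[Hfin [_ [_ HnS]]] [_ [_ [Htree Hleap]]]].
  assert (HG : ~ frame_valid (Dframe RG) (rho, Dia S (Var Sig p))).
  { intro H. apply Hhorn in H. exact (HnS (H (fun x => x) (fun R x y h => h))). }
  apply not_all_ex_not in HG. destruct HG as [V' HG].
  apply not_all_ex_not in HG. destruct HG as [w' HG].
  apply imply_to_and in HG. destruct HG as [Hs' Hn'].
  assert (Ew' : w' = u) by (eapply (Ulem (r:=RG)); [tauto | exact Hs' | exact Hn']).
  subst w'.
  set (F4 := fun R x y => RG R x y \/ (R = S /\ x = u /\ y <> v)).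
  assert (HF : ~ frame_valid (Dframe F4) (rho, Dia S (Var Sig p))).
  { intro H. apply Hhorn in H. specialize (H (fun x => x)).
    destruct H as [H | [_ [_ H]]]; [intros R x y h; left; exact h | exact (HnS H) | exact (H eq_refl)]. }
  apply not_all_ex_not in HF. destruct HF as [V HF].
  apply not_all_ex_not in HF. destruct HF as [w HF].
  apply imply_to_and in HF. destruct HF as [Hs Hn].
  assert (Ew : w = u).
  { eapply (Ulem (r:=F4)); [| exact Hs | exact Hn].
    intros R x y Hx; unfold F4; split; [intros [H | [_ [H _]]]; [exact H | congruence] | intro; left; assumption]. }
  subst w.
  assert (Hpv : forall y, V p y -> y = v).
  { intros y Hy. apply NNPP; intro Hyv. apply Hn. simpl. exists y. split; [right; auto | exact Hy]. }
  assert (Htop : forall phi, sat (Dframe RG) V' u phi -> sat (Dframe F4) V u phi -> sat (Dframe RG) V u phi).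
  { intro phi; induction phi; simpl; auto.
    - intros [H1 H2] [H3 H4]; split; auto.
    - intros [y' [Hy'1 _]] [y [Hy1 Hy2]]. exists y.
      destruct Hy1 as [Hy1 | [ES _]].
      + split; [exact Hy1|]. apply (@Tr F4 RG V); auto.
        * intros R x z Hx [H | [_ [H _]]]; [split; [exact H | eapply Hnoin; eassumption] | congruence].
        * eapply Hnoin; eassumption.
      + subst s. exfalso. exact (Hleap y' Hy'1). }
  assert (HG := Htop rho Hs' Hs).
  refine (sat_transfer (Dframe RG) (Dframe RG) (fun x => x) V Vstar _ _ rho u HG).
  - intros; assumption.
  - intros n x Hx. unfold Vstar. destruct (Nat.eq_dec n p); [subst; apply Hpv; exact Hx | exact I].
Qed.
End Leap.

Lemma leap_valid (A : SLO Sig) (i : spi Sig) :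
  slo_valid A i -> leapfrog_implication i -> frame_valid (FF A) i.
Proof.
  intros HA [rho [S [p [-> [D [RG [u [v [Hlp Hhorn]]]]]]]]].
  apply (proj2 (Hhorn (FF A))). intros f Hf a Ha.
  set (val := fun n => if Nat.eq_dec n p then a else top A).
  assert (Hst := star Hlp Hhorn).
  assert (H1 : sat (FF A) (fun n (Q : filt A) => proj1_sig Q (val n)) (f u) rho).
  { refine (sat_transfer (Dframe u RG) (FF A) f (Vstar v p) (fun n (Q : filt A) => proj1_sig Q (val n)) _ _ rho u Hst).
    - intros R x y H; apply Hf; exact H.
    - intros n x Hx. unfold Vstar in Hx; unfold val.
      destruct (Nat.eq_dec n p); [subst; exact Ha | apply (proj2_sig (f x))]. }
  apply FF_key in H1.
  specialize (HA val). simpl in HA. unfold val at 2 in HA.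
  destruct (Nat.eq_dec p p) as [_|C]; [|congruence].
  destruct (proj2_sig (f u)) as [_ [Hu _]]. eapply Hu; [exact H1 | exact HA].
Qed.

Lemma emb_aeval (A : SLO Sig) (F : frame Sig) (h : car A -> W F -> Prop)
  (Hm : forall a b, h (meet A a b) = (fun w => h a w /\ h b w))
  (Ht : h (top A) = (fun _ => True))
  (Hd : forall R a, h (dia A R a) = (fun w => exists v, rel F R w v /\ h a v)) val :
  forall phi w, h (aeval A val phi) w <-> sat F (fun n => h (val n)) w phi.
Proof.
  intro phi; induction phi; intro w; simpl.
  - tauto.
  - rewrite Ht; tauto.
  - rewrite Hm, IHphi1, IHphi2; tauto.
  - rewrite Hd. split; intros [x [H1 H2]]; exists x; split; auto; apply IHphi; auto.
Qed.
End Gen.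

Theorem theorem5p9 (Sig : Type) (Sig_ne : inhabited Sig) (Sigma : spi Sig -> Prop)
  (HSigma : forall i, Sigma i -> leapfrog_implication i) :
  complex (spi_logic Sigma) /\ complete Sigma.
Proof.
  assert (Hc : complex (spi_logic Sigma)).
  { intros A HA. exists (FF A). split.
    - intros i Hi. apply Fstar_valid. apply Hi. intros j Hj. apply Fstar_valid.
      apply leap_valid; [apply HA; intros B HB; apply HB; exact Hj | apply HSigma; exact Hj].
    - apply FF_embeds. }
  split; [exact Hc|].
  intro i; split.
  - intros Hk A HA.
    destruct (Hc A (fun j Hj => Hj A HA)) as [F [HF [h [Hinj [Hm [Ht Hd]]]]]].
    assert (Fi : frame_valid F i) by (apply Hk; intros j Hj; apply HF; intros B HB; apply HB; exact Hj).
    intro val. unfold sle. apply Hinj. rewrite Hm.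
    apply functional_extensionality; intro w; apply propositional_extensionality.
    split; [tauto|]. intro H. split; [exact H|].
    apply (@emb_aeval _ A F h Hm Ht Hd val). apply Fi. apply (@emb_aeval _ A F h Hm Ht Hd val). exact H.
  - intros Hs F HF. apply Fstar_valid. apply Hs. intros j Hj; apply Fstar_valid; auto.
Qed.
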